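(* Let $\sigma$ be a permutation of $\mathbb{N}$ and let $\tilde\sigma$ be its extension to $\mathbb{Z}$ by the identity, i.e. $\tilde\sigma(k)=\sigma(k)$ for $k\in\mathbb{N}$ and $\tilde\sigma(k)=k$ otherwise. Then $$\mathrm{RW}(\tilde\sigma)=\mathrm{BST}(\sigma)\cup\bigcup_{k<0}\{1^k\}=\mathrm{BST}(\sigma)\cup\bigcup_{k\in\mathbb{N}}\{\Upsilon^k\},$$ and consequently $\mathrm{RW}(\tilde\sigma)\cap\mathbb{T}=\mathrm{BST}(\sigma)$.
   Context: $\mathbb{N}=\{1,2,\dots\}$. $\mathbb{T}$ is the set of finite words over $\{0,1\}$ with empty word $\varnothing$; $aS=\{aw:w\in S\}$. For a finite sequence $x=(x_1,\dots,x_m)$ of distinct numbers, $\mathrm{BST}(x)=\emptyset$ if $m=0$, else $\{\varnothing\}\cup0\,\mathrm{BST}(x_-)\cup1\,\mathrm{BST}(x_+)$, $x_-$ (resp. $x_+$) the subsequence of entries smaller (resp. larger) than $x_1$ in original order; for infinite $x$, $\mathrm{BST}(x)=\bigcup_m\mathrm{BST}(x_1,\dots,x_m)$; $\mathrm{BST}(\sigma)=\mathrm{BST}(\sigma(1),\sigma(2),\dots)$. Extended words: add a letter $\Upsilon$ with $1^k=1\cdots1$ ($k$ letters) for $k>0$, $1^0=\varnothing$, $1^k=\Upsilon^{|k|}$ for $k<0$. Redwood tree: an injective $\sigma:\mathbb{Z}\to\mathbb{Z}$ is admissible if $|\{i\in\mathbb{N}:\sigma(i)\notin\mathbb{N}\}|+|\{i\in\mathbb{Z}\setminus\mathbb{N}:\sigma(i)\in\mathbb{N}\}|<\infty$;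 a record index is $r$ with $\sigma(r)>\sigma(k)$ for all $k<r$; the standard record representation is the increasing enumeration $(r_k)_{k\in\mathbb{Z}}$ of record indices with $\sigma(r_0)\le0<\sigma(r_1)$; $\sigma[k]$ is the sequence of values $\sigma(i)$ with $\sigma(r_k)<\sigma(i)<\sigma(r_{k+1})$ in increasing order of $i$; $\mathrm{RW}(\sigma)=\bigcup_{k\in\mathbb{Z}}(\{1^k\}\cup1^k0\,\mathrm{BST}(\sigma[k]))$. *)

(* Defs.v *)
From mathcomp Require Import all_boot all_order all_algebra.
Set Implicit Arguments. Unset Strict Implicit. Unset Printing Implicit Defensive.
Import Order.TTheory GRing.Theory Num.Theory.
Local Open Scope ring_scope.

Inductive letter := Zero | One | Ups.

Definition word := seq letter.

Fixpoint inT (w : word) : Prop :=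
  match w with [::] => True | Ups :: _ => False | _ :: w' => inT w' end.

(* 1^k for k : int ; 1^k = Upsilon^|k| for k < 0 (Negz n = -(n+1)). *)
Definition pow1 (k : int) : word :=
  match k with Posz n => nseq n One | Negz n => nseq n.+1 Ups end.

(* Membership in BST(x) for a finite sequence x, by unfolding
   BST(x) = {} if x empty, else {empty} u 0 BST(x_-) u 1 BST(x_+). *)
Fixpoint inBST (x : seq int) (w : word) {struct w} : Prop :=
  match x with
  | [::] => False
  | a :: t =>
    match w with
    | [::] => True
    | Zero :: w' => inBST [seq y <- t | y < a] w'
    | One :: w' => inBST [seq y <- t | a < y] w'
    | Ups :: _ => False
    end
  end.

(* sigma is a permutation of N = {1,2,...} (values at 0 are irrelevant). *)
Definition is_permN (s : nat -> nat) : Prop :=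
  [/\ (forall n, (0 < n)%N -> (0 < s n)%N),
      (forall m n, (0 < m)%N -> (0 < n)%N -> s m = s n -> m = n) &
      (forall m, (0 < m)%N -> exists2 n, (0 < n)%N & s n = m)].

Definition inBSTperm (s : nat -> nat) (w : word) : Prop :=
  exists m : nat, inBST [seq (s i)%:Z | i <- iota 1 m] w.

Definition ext (s : nat -> nat) (k : int) : int :=
  if 0 < k then (s (absz k))%:Z else k.

Definition is_record (s : int -> int) (r : int) : Prop :=
  forall k, k < r -> s k < s r.

Definition std_rec_rep (s : int -> int) (r : int -> int) : Prop :=
  [/\ (forall k, r k < r (k + 1)),
      (forall i, is_record s i <-> exists k, r k = i) &
      s (r 0) <= 0 < s (r 1)].

Definition block (s : int -> int) (a b : int) (bl : seq int) : Prop :=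
  exists idx : seq int,
    [/\ sorted <%R idx,
        (forall i, i \in idx <-> (a < s i) && (s i < b)) &
        bl = map s idx].

(* RW(sigma) = U_{k in Z} ({1^k} u 1^k 0 BST(sigma[k])). *)
Definition inRW (s : int -> int) (w : word) : Prop :=
  exists r, std_rec_rep s r /\
    exists k : int,
      w = pow1 k \/
      exists bl w', [/\ block s (s (r k)) (s (r (k + 1))) bl, inBST bl w' &
                        w = pow1 k ++ Zero :: w'].

(* Main.v *)
Require Import Defs.
From mathcomp Require Import all_boot all_order all_algebra.
From mathcomp Require Import zify.
Import Order.TTheory GRing.Theory Num.Theory.
Set Implicit Arguments. Unset Strict Implicit.

Lemma ex_next (s : nat -> nat) (hs : is_permN s) (r : nat) :
  exists i, (0 < i)%N && (s r < s i)%N.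
Proof.
case: hs => _ _ hsur.
have [n n0 hn] := hsur (s r).+1 (ltn0Sn _).
by exists n; rewrite n0 hn ltnSn.
Qed.

Definition nxt (s : nat -> nat) (hs : is_permN s) (r : nat) : nat :=
  ex_minn (ex_next hs r).

Fixpoint recn (s : nat -> nat) (hs : is_permN s) (n : nat) : nat :=
  match n with 0 => 1%N | n'.+1 => nxt hs (recn hs n') end.

Definition cv (s : nat -> nat) (hs : is_permN s) (n : nat) : nat :=
  match n with 0 => 0%N | n'.+1 => s (recn hs n') end.

Lemma nxtP (s : nat -> nat) (hs : is_permN s) r :
  [/\ (0 < nxt hs r)%N, (s r < s (nxt hs r))%N &
      forall j, (0 < j)%N -> (j < nxt hs r)%N -> (s j <= s r)%N].
Proof.
rewrite /nxt; case: ex_minnP => m /andP[m0 hm] hmin; split => // j j0 hj.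
rewrite leqNgt; apply/negP => hsj.
have := hmin j; rewrite j0 hsj /= => /(_ isT); lia.
Qed.

Lemma recn_pos s (hs : is_permN s) n : (0 < recn hs n)%N.
Proof. by case: n => //= n; case: (nxtP hs (recn hs n)). Qed.

Lemma recn_rec s (hs : is_permN s) n j :
  (0 < j)%N -> (j < recn hs n)%N -> (s j < s (recn hs n))%N.
Proof.
case: n => [|n] /=; first lia.
move=> j0 hj; case: (nxtP hs (recn hs n)) => _ h1 h2.
have := h2 j j0 hj; lia.
Qed.

Lemma recn_lt s (hs : is_permN s) n : (recn hs n < recn hs n.+1)%N.
Proof.
rewrite /=; case: (nxtP hs (recn hs n)) => p0 h1 h2.
case: (ltngtP (recn hs n) (nxt hs (recn hs n))) => // h.
- by have := recn_rec p0 h; move/(ltn_trans h1); rewrite ltnn.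
- by rewrite -h ltnn in h1.
Qed.

Lemma recn_mono s (hs : is_permN s) n n' : (n <= n')%N -> (recn hs n <= recn hs n')%N.
Proof.
move=> h; rewrite -(subnKC h); elim: (n' - n)%N => [|d IH]; first by rewrite addn0.
rewrite addnS; apply: leq_trans IH _; exact: ltnW (recn_lt _ _).
Qed.

Lemma recn_ge s (hs : is_permN s) n : (n < recn hs n)%N.
Proof. elim: n => [|n IH] //; have := recn_lt hs n; lia. Qed.

Lemma cv_below s (hs : is_permN s) n j :
  (0 < j)%N -> (j < recn hs n)%N -> (s j <= cv hs n)%N.
Proof.
case: n => [|n] /=; first lia.
move=> j0 hj; by case: (nxtP hs (recn hs n)) => _ _ /(_ j j0 hj).
Qed.

Lemma cv_lt s (hs : is_permN s) n : (cv hs n < cv hs n.+1)%N.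
Proof.
case: n => [|n] /=.
- by case: hs => h _ _; apply: h.
- by case: (nxtP hs (recn hs n)).
Qed.

Lemma cv_rec s (hs : is_permN s) n : cv hs n.+1 = s (recn hs n).
Proof. by []. Qed.

Lemma recn_cover s (hs : is_permN s) p : (0 < p)%N ->
  exists n, (recn hs n <= p < recn hs n.+1)%N.
Proof.
move=> p0.
suff: forall d n, (p - recn hs n < d)%N -> (recn hs n <= p)%N ->
   exists n, (recn hs n <= p < recn hs n.+1)%N.
  by move=> /(_ p.+1 0%N); apply => /=; lia.
elim=> [|d IH] n h1 h2; first lia.
case: (ltnP p (recn hs n.+1)) => h3; first by exists n; rewrite h2 h3.
apply: (IH n.+1) => //; have := recn_lt hs n; lia.
Qed.
Local Open Scope ring_scope.

Definition incr (f : int -> int) := forall k, f k < f (k + 1).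

Lemma incr_lt f : incr f -> forall k l, k < l -> f k < f l.
Proof.
move=> h k l kl.
have H : forall d : nat, f k < f (k + Posz d.+1).
  elim=> [|d IH]; first exact: h.
  have -> : k + Posz d.+2 = (k + Posz d.+1) + 1 by lia.
  exact: lt_trans IH (h _).
have -> : l = k + Posz (absz (l - k - 1)%R).+1 by lia.
exact: H.
Qed.

Lemma incr_ltE f : incr f -> forall k l, (f k < f l) = (k < l).
Proof.
move=> h k l; apply/idP/idP; last exact: incr_lt.
move=> hf; case: (ltgtP k l) => // hkl.
- by have := incr_lt h hkl; lia.
- by rewrite hkl in hf; lia.
Qed.

Lemma incr_uniq f g : incr f -> incr g ->
  (forall i, (exists k, f k = i) <-> (exists k, g k = i)) -> f 0 = g 0 ->
  forall k, f k = g k.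
Proof.
move=> hf hg hfg h0.
have Lf := incr_ltE hf; have Lg := incr_ltE hg.
have Lf' : forall k l, (f k <= f l) = (k <= l).
  by move=> k l; rewrite !leNgt Lf.
have Lg' : forall k l, (g k <= g l) = (k <= l).
  by move=> k l; rewrite !leNgt Lg.
have up : forall k, f k = g k -> f (k + 1) = g (k + 1).
  move=> k e.
  have [j hj] : exists j, g j = f (k + 1) by apply/hfg; exists (k + 1).
  have [i hi] : exists i, f i = g (k + 1) by apply/hfg; exists (k + 1).
  have b0 : f k < f (k + 1) by rewrite Lf; lia.
  case: (ltgtP j (k + 1)) => hjk.
  - have b1 : g j <= g k by rewrite Lg'; lia.
    lia.
  - have b1 : g (k + 1) < g j by rewrite Lg; lia.
    have b2 : g k < g (k + 1) by rewrite Lg; lia.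
    have b3 : f k < f i by lia.
    have b4 : f i < f (k + 1) by lia.
    rewrite Lf in b3; rewrite Lf in b4; lia.
  - by rewrite -hj hjk.
have down : forall k, f k = g k -> f (k - 1) = g (k - 1).
  move=> k e.
  have [j hj] : exists j, g j = f (k - 1) by apply/hfg; exists (k - 1).
  have [i hi] : exists i, f i = g (k - 1) by apply/hfg; exists (k - 1).
  have b0 : f (k - 1) < f k by rewrite Lf; lia.
  case: (ltgtP j (k - 1)) => hjk.
  - have b1 : g j < g (k - 1) by rewrite Lg; lia.
    have b2 : g (k - 1) < g k by rewrite Lg; lia.
    have b3 : f (k - 1) < f i by lia.
    have b4 : f i < f k by lia.
    rewrite Lf in b3; rewrite Lf in b4; lia.
  - have b1 : g k <= g j by rewrite Lg'; lia.
    lia.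
  - by rewrite -hj hjk.
have all : forall n : nat, f (Posz n) = g (Posz n) /\ f (- Posz n) = g (- Posz n).
  elim=> [|n [IH1 IH2]]; first by rewrite oppr0.
  split.
  - have -> : Posz n.+1 = Posz n + 1 by lia.
    exact: up.
  - have -> : - Posz n.+1 = - Posz n - 1 by lia.
    exact: down.
case=> n; first by case: (all n).
by rewrite NegzE; case: (all n.+1).
Qed.

Lemma s_pos s (hs : is_permN s) p : (0 < p)%N -> (0 < s p)%N.
Proof. by case: hs => h _ _; apply: h. Qed.

Lemma ext_pos s p : (0 < p)%N -> ext s (Posz p) = Posz (s p).
Proof. by rewrite /ext ltz_nat => ->. Qed.

Lemma ext_npos s k : k <= 0 -> ext s k = k.
Proof. by rewrite /ext => h; case: ltrP h => //; lia. Qed.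

Lemma ext_sign s (hs : is_permN s) k : (0 < ext s k) = (0 < k).
Proof.
case: (ltrP 0 k) => hk.
- have [p ep] : exists p : nat, k = Posz p by exists (absz k); lia.
  subst k; have p0 : (0 < p)%N by lia.
  by rewrite ext_pos // ltz_nat s_pos.
- by rewrite ext_npos //; lia.
Qed.

Lemma recordP s (hs : is_permN s) i :
  is_record (ext s) i <-> i <= 0 \/ exists n, i = Posz (recn hs n).
Proof.
split.
- move=> hr; case: (lerP i 0) => hi; first by left.
  right; have [p ep] : exists p : nat, i = Posz p by exists (absz i); lia.
  have p0 : (0 < p)%N by lia.
  have [n /andP[h1 h2]] := recn_cover hs p0.
  exists n; case: (ltngtP (recn hs n) p) => h; last by rewrite h.
  + have := hr (Posz (recn hs n)); rewrite ep ltz_nat => /(_ h).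
    rewrite !ext_pos ?recn_pos // ltz_nat.
    have := cv_below p0 h2; rewrite cv_rec; lia.
  + lia.
- move=> hi k hk; case: hi => [hi|[n en]].
  + by rewrite !ext_npos //; lia.
  + rewrite en ext_pos ?recn_pos //.
    case: (lerP k 0) => k0.
    * rewrite ext_npos //; have := s_pos hs (recn_pos hs n); lia.
    * have [p ep] : exists p : nat, k = Posz p by exists (absz k); lia.
      rewrite ep ext_pos; last lia.
      rewrite ltz_nat; apply: recn_rec; lia.
Qed.

Definition Rr s (hs : is_permN s) (k : int) : int :=
  match k with Posz 0 => 0 | Posz n.+1 => Posz (recn hs n) | Negz n => Negz n end.

Lemma Rr_npos s (hs : is_permN s) k : k <= 0 -> Rr hs k = k.
Proof. by case: k => [[|n]|n] //=. Qed.

Lemma Rr_incr s (hs : is_permN s) : incr (Rr hs).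
Proof.
case=> [[|n]|n].
- by [].
- have -> : Posz n.+1 + 1 = Posz n.+2 by lia.
  by rewrite /= ltz_nat recn_lt.
- case: n => [|n].
  + by have -> : Negz 0 + 1 = 0 by lia.
  + have -> : Negz n.+1 + 1 = Negz n by lia.
    rewrite /=; lia.
Qed.

Lemma ext_Rr s (hs : is_permN s) (n : nat) : ext s (Rr hs (Posz n)) = Posz (cv hs n).
Proof. by case: n => [|n] //=; rewrite ext_pos ?recn_pos. Qed.

Lemma Rr_std s (hs : is_permN s) : std_rec_rep (ext s) (Rr hs).
Proof.
split.
- exact: Rr_incr.
- move=> i; rewrite recordP; split.
  + case=> [hi|[n ->]]; first by exists i; rewrite Rr_npos.
    by exists (Posz n.+1).
  + case=> k <-; case: k => [[|n]|n] /=; try by left.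
    by right; exists n.
- have e0 := ext_Rr hs 0; have e1 := ext_Rr hs 1.
  have -> : (1 : int) = Posz 1 by [].
  rewrite e0 e1 /=.
  by have := s_pos hs (isT : (0 < 1)%N); lia.
Qed.

Lemma std_uniq s (hs : is_permN s) r : std_rec_rep (ext s) r -> forall k, r k = Rr hs k.
Proof.
case=> hinc hrec /andP[h0 h1].
have Lr := incr_ltE hinc.
have r0 : r 0 <= 0.
  rewrite leNgt -(ext_sign hs); lia.
have r1 : 0 < r 1 by rewrite -(ext_sign hs).
have [j hj] : exists j, r j = 0 by apply/hrec/recordP; left.
have j0 : j = 0.
  case: (ltgtP j 0) => // hj0.
  - have := Lr j 0; rewrite hj0 hj; lia.
  - have := Lr 0 j; have := Lr j 1.
    case: (ltgtP j 1) => hj1.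
    + lia.
    + rewrite hj; lia.
    + by rewrite hj1 in hj; lia.
apply: (incr_uniq hinc (Rr_incr hs)).
- move=> i; rewrite -hrec; have := Rr_std hs; case=> _ -> _; by [].
- by subst j; rewrite hj.
Qed.

Definition Pm (s : nat -> nat) (m : nat) : seq int := [seq Posz (s i) | i <- iota 1 m].
Definition Q s (hs : is_permN s) n m := [seq y <- Pm s m | Posz (cv hs n) < y].
Definition Bm s (hs : is_permN s) n m :=
  [seq y <- Pm s m | (Posz (cv hs n) < y) && (y < Posz (cv hs n.+1))].
Definition fl s (hs : is_permN s) n m :=
  [seq i <- iota 1 m | ((cv hs n < s i) && (s i < cv hs n.+1))%N].

Lemma Bm_nat s (hs : is_permN s) n m : Bm hs n m = map (fun i => Posz (s i)) (fl hs n m).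
Proof.
by rewrite /Bm /Pm filter_map /fl; congr map; try apply: eq_filter => i /=.
Qed.

Lemma Q0 s (hs : is_permN s) m : Q hs 0 m = Pm s m.
Proof.
apply/all_filterP/allP => y /mapP [i]; rewrite mem_iota => hi ->.
rewrite /= ltz_nat; apply: (s_pos hs); lia.
Qed.

Lemma filt_nil s (hs : is_permN s) n (l : seq nat) :
  (forall i, i \in l -> (0 < i < recn hs n)%N) ->
  [seq i <- l | Posz (cv hs n) < Posz (s i)] = [::].
Proof.
move=> hl; rewrite (@eq_in_filter _ _ pred0) ?filter_pred0 // => i /hl /andP[h1 h2].
by rewrite /= ltz_nat ltnNge (cv_below h1 h2).
Qed.

Lemma Q_nil s (hs : is_permN s) n m : (m < recn hs n)%N -> Q hs n m = [::].
Proof.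
move=> hm; rewrite /Q /Pm filter_map.
have := @filt_nil s hs n (iota 1 m); rewrite /preim => -> //.
by move=> i; rewrite mem_iota; lia.
Qed.

Lemma Q_cons s (hs : is_permN s) n m : (recn hs n <= m)%N ->
  exists t, Q hs n m = Posz (cv hs n.+1) :: t.
Proof.
move=> hm; rewrite /Q /Pm filter_map.
have p := recn_pos hs n.
have e : m = ((recn hs n).-1 + (m - recn hs n).+1)%N by lia.
rewrite e iotaD filter_cat.
have := @filt_nil s hs n (iota 1 (recn hs n).-1); rewrite /preim => -> //; last first.
  by move=> i; rewrite mem_iota; lia.
have -> : (1 + (recn hs n).-1)%N = recn hs n by lia.
rewrite /= ltz_nat cv_lt /=.
by eexists.
Qed.

Lemma Q_next s (hs : is_permN s) n m :
  [seq y <- Q hs n m | Posz (cv hs n.+1) < y] = Q hs n.+1 m.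
Proof.
rewrite /Q -filter_predI; apply: eq_filter => y /=.
have := cv_lt hs n; rewrite -ltz_nat => h.
by case e: (Posz (cv hs n.+1) < y) => //=; apply: lt_trans h e.
Qed.

Lemma Q_low s (hs : is_permN s) n m :
  [seq y <- Q hs n m | y < Posz (cv hs n.+1)] = Bm hs n m.
Proof. by rewrite /Q /Bm -filter_predI; apply: eq_filter => y /=; rewrite andbC. Qed.

Lemma S_nil s (hs : is_permN s) n m : inBST (Q hs n m) [::] <-> (recn hs n <= m)%N.
Proof.
case: (leqP (recn hs n) m) => h.
- by have [t ->] := Q_cons h.
- by rewrite Q_nil.
Qed.

Lemma S_one s (hs : is_permN s) n m w :
  inBST (Q hs n m) (One :: w) <-> inBST (Q hs n.+1 m) w.
Proof.
case: (leqP (recn hs n) m) => h.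
- have [t e] := Q_cons h; rewrite -Q_next e /= ltxx.
  by [].
- have h' : (m < recn hs n.+1)%N by have := recn_lt hs n; lia.
  rewrite (Q_nil h) (Q_nil h'); case: w => [|? ?] /=; tauto.
Qed.

Lemma S_zero s (hs : is_permN s) n m w :
  inBST (Q hs n m) (Zero :: w) <-> inBST (Bm hs n m) w.
Proof.
case: (leqP (recn hs n) m) => h.
- have [t e] := Q_cons h; rewrite -Q_low e /= ltxx.
  by [].
- rewrite -Q_low (Q_nil h); case: w => [|? ?] /=; tauto.
Qed.

Lemma S_ups s (hs : is_permN s) n m w : ~ inBST (Q hs n m) (Ups :: w).
Proof.
case: (leqP (recn hs n) m) => h.
- by have [t ->] := Q_cons h.
- by rewrite Q_nil.
Qed.

Lemma S_pow s (hs : is_permN s) j n m w :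
  inBST (Q hs n m) (nseq j One ++ w) <-> inBST (Q hs (n + j) m) w.
Proof.
elim: j n => [|j IH] n; first by rewrite addn0.
have -> : nseq j.+1 One ++ w = One :: (nseq j One ++ w) by [].
by rewrite S_one IH addnS.
Qed.

Lemma inBST_cat (w : word) (x y : seq int) : inBST x w -> inBST (x ++ y) w.
Proof.
elim: w x y => [|l w IH] [|a x] y //=.
case: l => //= h.
- by rewrite filter_cat; apply: IH.
- by rewrite filter_cat; apply: IH.
Qed.

Lemma inBST_T (w : word) (x : seq int) : inBST x w -> inT w.
Proof.
elim: w x => [|l w IH] [|a x] //=.
by case: l => // /IH.
Qed.

Lemma Bm_ext s (hs : is_permN s) n m M : (m <= M)%N -> exists y, Bm hs n M = Bm hs n m ++ y.
Proof.
move=> h; rewrite /Bm /Pm.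
have -> : M = (m + (M - m))%N by lia.
by rewrite iotaD map_cat filter_cat; eexists.
Qed.

Lemma word_dec (w : word) : exists j rest, w = nseq j One ++ rest /\
  (rest = [::] \/ exists w', rest = Zero :: w' \/ rest = Ups :: w').
Proof.
elim: w => [|l w [j [rest [-> hr]]]]; first by exists 0%N, [::]; split => //; left.
case: l.
- by exists 0%N, (Zero :: (nseq j One ++ rest)); split => //; right; eexists; left.
- by exists j.+1, rest.
- by exists 0%N, (Ups :: (nseq j One ++ rest)); split => //; right; eexists; right.
Qed.

Lemma bound s (hs : is_permN s) K : exists N, forall i, (0 < i)%N -> (s i < K)%N -> (i <= N)%N.
Proof.
elim: K => [|K [N hN]]; first by exists 0%N.
case: K hN => [|K] hN.
  by exists N => i i0 hi; have := s_pos hs i0; lia.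
case: hs (hs) => _ hinj hsur hs.
have [n0 n00 hn0] := hsur K.+1 (ltn0Sn _).
exists (maxn N n0) => i i0 hi.
case: (ltngtP (s i) K.+1) => h.
- have := hN i i0 h; lia.
- lia.
- have := hinj i n0 i0 n00; rewrite h hn0 => /(_ erefl) ->; lia.
Qed.

Lemma mem_fl s (hs : is_permN s) n N m :
  (forall i, (0 < i)%N -> (s i < cv hs n.+1)%N -> (i <= N)%N) -> (N <= m)%N ->
  forall i : int, (i \in map Posz (fl hs n m)) =
    (Posz (cv hs n) < ext s i) && (ext s i < Posz (cv hs n.+1)).
Proof.
move=> hN hm i; case: (lerP i 0) => hi.
- rewrite ext_npos //.
  have -> : (Posz (cv hs n) < i) = false by lia.
  apply/negbTE/negP => /mapP [j]; rewrite mem_filter mem_iota => /andP[_ hj] e; lia.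
- have [p ep] : exists p : nat, i = Posz p by exists (absz i); lia.
  subst i; have p0 : (0 < p)%N by lia.
  rewrite mem_map; last by move=> a b [].
  rewrite mem_filter mem_iota ext_pos // !ltz_nat.
  case e: ((cv hs n < s p) && (s p < cv hs n.+1))%N => //=.
  move/andP: e => [_ e]; have := hN p p0 e; lia.
Qed.

Lemma sorted_fl s (hs : is_permN s) n m : sorted <%R (map Posz (fl hs n m)).
Proof.
apply: (homo_sorted (e := ltn)); first by move=> a b; rewrite ltz_nat.
apply: sorted_filter; first exact: ltn_trans.
exact: iota_ltn_sorted.
Qed.

Lemma map_ext_fl s (hs : is_permN s) n m :
  map (ext s) (map Posz (fl hs n m)) = Bm hs n m.
Proof.
rewrite Bm_nat -map_comp; apply/eq_in_map => j.
rewrite mem_filter mem_iota => /andP[_ hj] /=; rewrite ext_pos //; lia.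
Qed.

Lemma BL1 s (hs : is_permN s) n : exists N, forall m, (N <= m)%N ->
  block (ext s) (Posz (cv hs n)) (Posz (cv hs n.+1)) (Bm hs n m).
Proof.
have [N hN] := bound hs (cv hs n.+1).
exists N => m hm; exists (map Posz (fl hs n m)); split.
- exact: sorted_fl.
- by move=> i; rewrite (mem_fl hN hm).
- by rewrite map_ext_fl.
Qed.

Lemma BL2 s (hs : is_permN s) n bl :
  block (ext s) (Posz (cv hs n)) (Posz (cv hs n.+1)) bl ->
  exists N, forall m, (N <= m)%N -> bl = Bm hs n m.
Proof.
case=> idx [hsort hmem ->].
have [N hN] := bound hs (cv hs n.+1).
exists N => m hm; rewrite -map_ext_fl; congr map.
apply: lt_sorted_eq => //; first exact: sorted_fl.
move=> i; rewrite (mem_fl hN hm); apply/idP/idP; by move/hmem.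
Qed.

Lemma part1 s (hs : is_permN s) w :
  inRW (ext s) w <-> inBSTperm s w \/ exists2 k : int, k < 0 & w = pow1 k.
Proof.
split.
- case=> r [hr [k hk]]; have er := std_uniq hs hr.
  case: k hk => [n|n] hk.
  + case: hk => [->|[bl [w' [hb hbl ->]]]].
    * left; exists (recn hs n); change (pow1 (Posz n)) with (nseq n One); rewrite -/(Pm s _) -Q0 -(cats0 (nseq n One)) /=.
      by rewrite S_pow add0n S_nil.
    * rewrite !er in hb.
      have e1 : Posz n + 1 = Posz n.+1 by lia.
      rewrite e1 in hb; move: hb; rewrite !ext_Rr => /BL2 [N hN].
      left; exists (maxn N (recn hs n)); rewrite -/(Pm s _) -Q0 /= S_pow add0n S_zero.
      by rewrite -(hN _ (leq_maxl _ _)).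
  + right; case: hk => [->|[bl [w' [hb hbl ->]]]]; first by exists (Negz n).
    exfalso; rewrite !er in hb.
    rewrite !Rr_npos in hb; try lia.
    rewrite !ext_npos in hb; try lia.
    case: hb => [[|i idx] [_ hmem ebl]].
    * by rewrite ebl in hbl; case: w' hbl.
    * have := hmem i; rewrite in_cons eqxx /= => /proj1 /(_ isT); lia.
- move=> H; exists (Rr hs); split; first exact: Rr_std.
  case: H => [[m hm]|[k k0 ->]]; last by exists k; left.
  rewrite -/(Pm s _) -Q0 in hm.
  have [j [rest [ew hrest]]] := word_dec w; subst w.
  rewrite S_pow add0n in hm.
  case: hrest hm => [->|[w' [->|->]]] hm.
  + by exists (Posz j); left; rewrite cats0.
  + rewrite S_zero in hm.
    have [N hN] := BL1 hs j.
    exists (Posz j); right; exists (Bm hs j (maxn N m)), w'; split => //.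
    * have -> : Posz j + 1 = Posz j.+1 by lia.
      by rewrite !ext_Rr; apply: hN; exact: leq_maxl.
    * have [y ->] := @Bm_ext s hs j m (maxn N m) (leq_maxr _ _).
      exact: inBST_cat.
  + by have := S_ups hm.
Qed.

Lemma negpow (w : word) : (exists2 k : int, k < 0 & w = pow1 k) <->
  (exists2 k : nat, (0 < k)%N & w = nseq k Ups).
Proof.
split.
- case=> [[n|n]] hk ->; first by exfalso; lia.
  by exists n.+1.
- case=> [[|n]] // _ ->; by exists (Negz n).
Qed.

Unset Implicit Arguments.
Set Strict Implicit.

Theorem lemma2p4 (s : nat -> nat) (hs : is_permN s) :
  [/\ (forall w, inRW (ext s) w <->
                 inBSTperm s w \/ exists2 k : int, k < 0 & w = pow1 k),
      (forall w, inRW (ext s) w <->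
                 inBSTperm s w \/ exists2 k : nat, (0 < k)%N & w = nseq k Ups) &
      (forall w, inRW (ext s) w /\ inT w <-> inBSTperm s w)].
Proof.
split => w.
- exact: (part1 hs w).
- have := part1 hs w; have := negpow w; tauto.
- rewrite (part1 hs); split.
  + case=> [[H|[k k0 ew]] hT] //; exfalso.
    case: k k0 ew => [n|n] k0 ew; first lia.
    by rewrite ew in hT.
  + move=> H; split; first by left.
    by case: H => m /inBST_T.
Qed.
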